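(* Let $G_1$ and $G_2$ be connected graphs, let $H=G_1+G_2$ be their join, and let $g$ be a constant function from the vertex set of the first copy of $H$ to the vertex set of the second copy of $H$. Then $fix(F_H)=2\,fix(H)-i$ for some $i\in\{0,1\}$.
   Context: The join $G_1+G_2$ of graphs with disjoint vertex sets is the union $G_1\cup G_2$ together with all edges joining every vertex of $G_1$ to every vertex of $G_2$. A set $S\subseteq V(H)$ is a fixing set of a graph $H$ if the only automorphism of $H$ fixing every vertex of $S$ is the identity; $fix(H)$ is the minimum cardinality of a fixing set of $H$. Functigraph: let $H_1,H_2$ be disjoint copies of a connected graph $H$, with $A=V(H_1)$, $B=V(H_2)$, and let $g:A\to B$ be a function. The functigraph $F_H$ has vertex set $A\cup B$ and edge set $E(H_1)\cup E(H_2)\cup\{ug(u):u\in A\}$. *)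

(* Defs.v *)
From mathcomp Require Import all_boot all_fingroup.
Set Implicit Arguments. Unset Strict Implicit. Unset Printing Implicit Defensive.

Definition simple_graph (T : finType) (e : rel T) : Prop :=
  symmetric e /\ irreflexive e.

Definition connected_graph (T : finType) (e : rel T) : Prop :=
  (exists x : T, True) /\ forall x y : T, connect e x y.

Definition is_automorphism (T : finType) (e : rel T) (f : {perm T}) : Prop :=
  forall x y, e (f x) (f y) = e x y.

Definition fixing_setb (T : finType) (e : rel T) (S : {set T}) : bool :=
  [forall f : {perm T},
     ([forall x, [forall y, e (f x) (f y) == e x y]] &&
      [forall x in S, f x == x]) ==> (f == 1%g)].

(* fix(H): minimum cardinality of a fixing set (the full vertex set is always
   fixing, so #|T| is a correct default for the minimum). *)
Definition fixnum (T : finType) (e : rel T) : nat :=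
  \big[minn/#|T|]_(S : {set T} | fixing_setb e S) #|S|.

Definition join_rel (T1 T2 : finType) (e1 : rel T1) (e2 : rel T2)
  : rel (T1 + T2)%type :=
  fun u v => match u, v with
  | inl a, inl b => e1 a b
  | inr a, inr b => e2 a b
  | _, _ => true
  end.

(* Functigraph F_H: vertex set A + B, with A = inl-copy and B = inr-copy of H,
   g : A -> B. *)
Definition functigraph_rel (T : finType) (e : rel T) (g : T -> T)
  : rel (T + T)%type :=
  fun u v => match u, v with
  | inl a, inl b => e a b
  | inr a, inr b => e a b
  | inl a, inr b => b == g a
  | inr b, inl a => b == g a
  end.

(* Main.v *)
Require Import Defs.
From mathcomp Require Import all_boot all_fingroup.
From mathcomp Require Import zify.
Set Implicit Arguments. Unset Strict Implicit. Unset Printing Implicit Defensive.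

Lemma fixing_setP (T : finType) (e : rel T) (S : {set T}) :
  reflect (forall f : {perm T}, (forall x y, e (f x) (f y) = e x y) ->
             (forall x, x \in S -> f x = x) -> f = 1%g)
          (fixing_setb e S).
Proof.
apply: (iffP forallP) => H.
- move=> f Hf HS; apply/eqP; apply: (implyP (H f)).
  apply/andP; split.
    by apply/forallP => x; apply/forallP => y; rewrite Hf.
  by apply/forall_inP => x /HS ->.
- move=> f; apply/implyP => /andP[/forallP Ha /forall_inP Hs]; apply/eqP.
  apply: H => [x y|x /Hs /eqP //]; exact/eqP/(forallP (Ha x) y).
Qed.

Lemma fixing_setT (T : finType) (e : rel T) : fixing_setb e [set: T].
Proof. apply/fixing_setP => f _ H; apply/permP => x; rewrite perm1 H //. Qed.

Lemma fixing_setS (T : finType) (e : rel T) (S S' : {set T}) :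
  S \subset S' -> fixing_setb e S -> fixing_setb e S'.
Proof.
move=> sub /fixing_setP H; apply/fixing_setP => f Hf HS; apply: H => // x xS.
by apply: HS; apply: (subsetP sub).
Qed.

Lemma bigmin_le_seq (I : eqType) (r : seq I) (P : pred I) (F : I -> nat) d x :
  x \in r -> P x -> \big[minn/d]_(i <- r | P i) F i <= F x.
Proof.
elim: r => [//|y r IH]; rewrite in_cons big_cons => /orP[/eqP <-|xr] Px.
  by rewrite Px geq_minl.
case: (P y); last exact: IH.
by rewrite geq_min IH ?orbT.
Qed.

Lemma fixnum_le (T : finType) (e : rel T) (S : {set T}) :
  fixing_setb e S -> fixnum e <= #|S|.
Proof.
move=> H; rewrite /fixnum; apply: bigmin_le_seq => //; exact: mem_index_enum.
Qed.

Lemma fixnum_ex (T : finType) (e : rel T) :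
  exists2 S : {set T}, fixing_setb e S & #|S| = fixnum e.
Proof.
pose P := [pred S : {set T} | fixing_setb e S].
have [S [PS]] : exists S : {set T}, P S /\ forall S', P S' -> #|S| <= #|S'|.
  have PT : P [set: T] by exact: fixing_setT.
  case: (arg_minnP (fun S : {set T} => #|S|) PT) => S PS Hm.
  by exists S.
move=> Hm; exists S => //.
apply/eqP; rewrite eqn_leq fixnum_le // andbT /fixnum.
apply: (big_rec (fun x => #|S| <= x)); first exact: max_card.
by move=> i x Pi Hx; rewrite leq_min Hx Hm.
Qed.

Section Main.
Variables (V : finType) (e : rel V) (c : V) (g : V -> V).
Hypothesis irr : irreflexive e.
Hypothesis P2 : forall x y, x != y -> exists z, e x z && (e z y || (z == y)).
Hypothesis cnb : exists z, e c z.
Hypothesis gc : forall u, g u = c.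

Local Notation F := (functigraph_rel e g).
Definition isaut (f : {perm (V + V)}) := forall x y, F (f x) (f y) = F x y.
Definition deg x := #|[set y | F x y]|.

Lemma deg_aut f x : isaut f -> deg (f x) = deg x.
Proof.
move=> Hf; rewrite /deg -(card_preimset _ (@perm_inj _ f)); apply: eq_card => y.
by rewrite !inE Hf.
Qed.

Lemma deg_c : #|V|.+1 <= deg (inr c).
Proof.
case: cnb => z ecz.
have sub : inr z |: (inl @: [set: V]) \subset [set y | F (inr c) y].
  apply/subsetP => y; rewrite !inE => /orP[/eqP ->|/imsetP[a _ ->]] /=.
    by []. by rewrite gc.
apply: leq_trans (subset_leq_card sub).
rewrite cardsU1 card_imset ?cardsT; last exact: inl_inj.
suff -> : inr z \notin [set inl x | x in [set: V]] by [].
by apply/imsetP => -[].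
Qed.

Lemma nbV (a : V) : #|[set b | e a b]| <= #|V|.-1.
Proof.
rewrite -(cardsC1 a); apply: subset_leq_card; apply/subsetP => b; rewrite !inE.
by apply: contraTneq => ->; rewrite irr.
Qed.

Lemma deg_other x : x != inr c -> deg x <= #|V|.
Proof.
case: x => [a|b] Hx.
  have sub : [set y | F (inl a) y] \subset inr c |: (inl @: [set b | e a b]).
    apply/subsetP => -[a'|b']; rewrite !inE /= ?gc.
      by move=> H; apply: imset_f; rewrite inE.
    by move=> /eqP ->; rewrite eqxx.
  apply: leq_trans (subset_leq_card sub) _.
  apply: leq_trans (leq_card_setU _ _) _.
  rewrite cards1 add1n.
  apply: leq_ltn_trans (leq_imset_card _ _) _.
  have : 0 < #|V| by apply/card_gt0P; exists a.
  by have := nbV a; case: #|V|.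
have sub : [set y | F (inr b) y] \subset inr @: [set z | e b z].
  apply/subsetP => -[a'|b']; rewrite !inE /= ?gc.
    by move/eqP=> E; rewrite E eqxx in Hx.
  by move=> H; apply: imset_f; rewrite inE.
apply: leq_trans (subset_leq_card sub) _.
apply: leq_trans (leq_imset_card _ _) _.
by apply: leq_trans (nbV b) _; apply: leq_pred.
Qed.

Lemma fix_c f : isaut f -> f (inr c) = inr c.
Proof.
move=> Hf; apply/eqP; apply/negP => /negP H.
have := deg_other H; rewrite deg_aut //.
by move=> H2; have := leq_trans deg_c H2; rewrite ltnn.
Qed.

Lemma aut_inv f : isaut f -> isaut f^-1.
Proof.
move=> Hf x y; rewrite -{2}(permKV f x) -{2}(permKV f y).
by rewrite Hf.
Qed.

Lemma inl_pres f : isaut f -> forall a, exists a', f (inl a) = inl a'.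
Proof.
move=> Hf a0; case E0: (f (inl a0)) => [a'|b0]; first by exists a'.
exfalso.
have nc : forall a b, f (inl a) = inr b -> b != c.
  move=> a b E; apply/eqP => Ebc; subst b.
  by have := perm_inj (etrans E (esym (fix_c Hf))).
have step : forall a a' b, f (inl a) = inr b -> e a a' ->
    exists b', f (inl a') = inr b'.
  move=> a a' b E eaa'.
  have := Hf (inl a) (inl a'); rewrite E /= eaa'.
  case: (f (inl a')) => [a''|b'] /=; last by exists b'.
  by rewrite gc (negbTE (nc _ _ E)).
have all_r : forall a, exists b, f (inl a) = inr b.
  move=> a; case: (eqVneq a0 a) => [<-|ne]; first by exists b0.
  have [z /andP[e0z H]] := P2 ne.
  have [b1 E1] := step _ _ _ E0 e0z.
  case/orP: H => [eza|/eqP <-]; last by exists b1.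
  exact: step _ _ _ E1 eza.
have sub : f @: (inl @: [set: V]) \subset inr @: [set~ c].
  apply/subsetP => y /imsetP[x /imsetP[a _ ->] ->].
  have [b Eb] := all_r a; rewrite Eb; apply: imset_f.
  by rewrite !inE (nc _ _ Eb).
have := subset_leq_card sub.
rewrite !card_imset ?cardsT ?cardsC1; try exact: inl_inj; try exact: inr_inj;
  try exact: perm_inj.
have : 0 < #|V| by apply/card_gt0P; exists a0.
by case: #|V| => // n _; rewrite ltnn.
Qed.

Lemma inr_pres f : isaut f -> forall b, exists b', f (inr b) = inr b'.
Proof.
move=> Hf b; case E: (f (inr b)) => [a|b']; last by exists b'.
have [a' E'] := inl_pres (aut_inv Hf) a.
by rewrite -E permK in E'.
Qed.

Lemma isautE f : isaut f <->
  (forall x y, F (f x) (f y) = F x y).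
Proof. by []. Qed.

Lemma fixF_A (S : {set V + V}) :
  fixing_setb F S -> fixing_setb e [set a | inl a \in S].
Proof.
move/fixing_setP => HF; apply/fixing_setP => h Hh HS.
pose fh := fun x : V + V => match x with inl a => inl (h a) | inr b => inr b end.
have fh_inj : injective fh.
  by move=> [a|b] [a'|b'] //= [] // /perm_inj ->.
have E := HF (perm fh_inj).
have Ea : forall a, (perm fh_inj) (inl a) = inl (h a) by move=> a; rewrite permE.
have Eb : forall b, (perm fh_inj) (inr b) = inr b by move=> b; rewrite permE.
have {}E : perm fh_inj = 1%g.
  apply: E.
    by move=> [a|b] [a'|b']; rewrite ?Ea ?Eb /= ?Hh ?gc.
  move=> [a|b] Hx; rewrite ?Ea ?Eb // HS //; by rewrite inE.
apply/permP => a; have := Ea a; rewrite E perm1 => -[<-]; by rewrite perm1.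
Qed.

Lemma fixF_B (S : {set V + V}) :
  fixing_setb F S -> fixing_setb e (c |: [set b | inr b \in S]).
Proof.
move/fixing_setP => HF; apply/fixing_setP => h Hh HS.
have hc : h c = c by apply: HS; rewrite !inE eqxx.
pose fh := fun x : V + V => match x with inl a => inl a | inr b => inr (h b) end.
have fh_inj : injective fh.
  by move=> [a|b] [a'|b'] //= [] // /perm_inj ->.
have E := HF (perm fh_inj).
have Ea : forall a, (perm fh_inj) (inl a) = inl a by move=> a; rewrite permE.
have Eb : forall b, (perm fh_inj) (inr b) = inr (h b) by move=> b; rewrite permE.
have {}E : perm fh_inj = 1%g.
  apply: E.
    move=> [a|b] [a'|b']; rewrite ?Ea ?Eb /= ?Hh ?gc //;
      by rewrite -{1}hc (inj_eq perm_inj).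
  move=> [a|b] Hx; rewrite ?Ea ?Eb // HS //; by rewrite !inE Hx orbT.
apply/permP => b; have := Eb b; rewrite E perm1 => -[<-]; by rewrite perm1.
Qed.

Lemma fixF_conv (SA SB : {set V}) :
  fixing_setb e SA -> fixing_setb e (c |: SB) ->
  fixing_setb F (inl @: SA :|: inr @: SB).
Proof.
move=> /fixing_setP HA /fixing_setP HB; apply/fixing_setP => f Hf HS.
pose fA := fun a => if f (inl a) is inl a' then a' else a.
pose fB := fun b => if f (inr b) is inr b' then b' else b.
have EA : forall a, f (inl a) = inl (fA a).
  by move=> a; rewrite /fA; have [a' ->] := inl_pres Hf a.
have EB : forall b, f (inr b) = inr (fB b).
  by move=> b; rewrite /fB; have [b' ->] := inr_pres Hf b.
have fA_inj : injective fA.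
  by move=> a1 a2 E; apply: inl_inj; apply: (@perm_inj _ f); rewrite !EA E.
have fB_inj : injective fB.
  by move=> a1 a2 E; apply: inr_inj; apply: (@perm_inj _ f); rewrite !EB E.
have pA1 : perm fA_inj = 1%g.
  apply: HA.
    by move=> x y; rewrite !permE; have := Hf (inl x) (inl y); rewrite !EA.
  move=> a aS; rewrite permE.
  have := HS (inl a); rewrite EA !inE imset_f // => /(_ isT) [].
  by [].
have pB1 : perm fB_inj = 1%g.
  apply: HB.
    by move=> x y; rewrite !permE; have := Hf (inr x) (inr y); rewrite !EB.
  move=> b; rewrite !inE permE => /orP[/eqP ->|bS].
    by have := fix_c Hf; rewrite EB => -[].
  have := HS (inr b); rewrite EB !inE imset_f ?orbT // => /(_ isT) [].
  by [].
apply/permP => -[a|b]; rewrite perm1.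
  by rewrite EA; have := congr1 (fun p : {perm V} => p a) pA1; rewrite permE perm1 => ->.
by rewrite EB; have := congr1 (fun p : {perm V} => p b) pB1; rewrite permE perm1 => ->.
Qed.

Lemma main_ineq : fixnum F <= 2 * fixnum e /\ 2 * fixnum e <= (fixnum F).+1.
Proof.
split.
  have [S0 fS0 cS0] := fixnum_ex e.
  have fS := fixF_conv fS0 (fixing_setS (subsetUr [set c] S0) fS0).
  apply: leq_trans (fixnum_le fS) _.
  apply: leq_trans (leq_card_setU _ _) _.
  rewrite -cS0 mul2n -addnn; apply: leq_add; exact: leq_imset_card.
have [S fS cS] := fixnum_ex F.
have hA := fixnum_le (fixF_A fS).
have hB := fixnum_le (fixF_B fS).
rewrite cardsU1 in hB.
set SA := [set a | inl a \in S] in hA *.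
set SB := [set b | inr b \in S] in hB *.
have disj : [disjoint inl @: SA & inr @: SB].
  rewrite disjoint_subset; apply/subsetP => x /imsetP[a _ ->]; rewrite inE.
  by apply/imsetP => -[b _].
have hU := (leq_card_setU (inl @: SA) (inr @: SB)).2.
rewrite disj in hU; move/eqP: hU.
rewrite !card_imset; try exact: inl_inj; try exact: inr_inj.
move=> hU.
have sub : inl @: SA :|: inr @: SB \subset S.
  apply/subsetP => x; rewrite inE => /orP[] /imsetP[y]; rewrite inE => yS -> //.
have := subset_leq_card sub; rewrite hU cS => h.
case: (c \notin SB) hB => /= hB; lia.
Qed.

End Main.

Theorem proposition3p13 (T1 T2 : finType) (e1 : rel T1) (e2 : rel T2)
  (g : (T1 + T2)%type -> (T1 + T2)%type) :
  simple_graph e1 -> simple_graph e2 ->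
  connected_graph e1 -> connected_graph e2 ->
  (exists c, forall u, g u = c) ->
  exists i : nat, i <= 1 /\
    fixnum (functigraph_rel (join_rel e1 e2) g) + i
    = 2 * fixnum (join_rel e1 e2).
Proof.
move=> [_ i1] [_ i2] [[t1 _] _] [[t2 _] _] [c gc].
have irr : irreflexive (join_rel e1 e2) by case=> x /=; [apply: i1|apply: i2].
have P2 : forall x y, x != y ->
    exists z, join_rel e1 e2 x z && (join_rel e1 e2 z y || (z == y)).
  move=> [a|b] [a'|b'] _.
  - by exists (inr t2).
  - by exists (inr b'); rewrite eqxx orbT.
  - by exists (inl a'); rewrite eqxx orbT.
  - by exists (inl t1).
have cnb : exists z, join_rel e1 e2 c z.
  by case: c {gc} => [a|b]; [exists (inr t2) | exists (inl t1)].
have [h1 h2] := main_ineq irr P2 cnb gc.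
exists (2 * fixnum (join_rel e1 e2) - fixnum (functigraph_rel (join_rel e1 e2) g)).
split; lia.
Qed.
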